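(* Let $G$ be a graph on $[n]$ that is upper crossing closed with respect to a total order $\unlhd$ on $E(G)$, and order the atoms of $NC_G$ (the single-edge bonds, identified with the edges of $G$) by $\unlhd$. Then for every $k\ge 0$, the set of $k$-element non-bounded-below (NBB) sets of atoms of $NC_G$ equals the set of noncrossing NBC sets of $G$ with $k$ edges.
   Context: All graphs are finite simple graphs with vertex set $[n]=\{1,\dots,n\}$; edges are written $ij$ with $i<j$. Two edges $a_1a_2$ and $b_1b_2$ cross if $a_1<b_1<a_2<b_2$ or $b_1<a_1<b_2<a_2$. A spanning subgraph is identified with its edge set. A bond of $G$ is a spanning subgraph each of whose connected components is an induced subgraph of $G$; it is noncrossing if there are no two distinct components with vertex sets $B,B'$ and $a,c\in B$, $b,d\in B'$, $a<b<c<d$. $NC_G$ is the poset of noncrossing bonds ordered by inclusion of edge sets. Two crossing edges $e,f$ are crossing closed if among all induced connected subgraphs of $G$ containing $e$ and $f$ there is a unique minimal one under containment, denoted $J(e,f)$; $G$ is crossing closed if all pairs of crossing edges are (then $NC_G$ is a lattice). $G$ is upper crossing closed with respect to $\unlhd$ if it is crossing closed and for all crossing edges $e,f$, $J(e,f)$ contains an edge $h$ with $h\lhd e$ and $h\lhd f$. In a lattice $L$ with a partial order $\unlhd$ on its atoms, a set $S$ of atoms is bounded below if there is an atom $a$ with $a\lhd s$ for all $s\in S$ and $a<\bigvee S$; a set of atoms is NBB if it contains no bounded-below subset. Given $\unlhd$, a broken circuit is the edge set of a cycle of $G$ with its smallest edge removed; an NBC set is a set of edges containing no broken circuit; a noncrossing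 NBC set is an NBC set no two of whose edges cross. *)

(* Defs.v *)
From mathcomp Require Import all_boot.
Set Implicit Arguments. Unset Strict Implicit. Unset Printing Implicit Defensive.

(* Vertices are 'I_n (standing for [n]); an edge ij with i<j is the pair (i,j). *)
Definition edge (n : nat) := ('I_n * 'I_n)%type.

Definition simple_graph n (E : {set edge n}) : Prop :=
  forall e, e \in E -> (e.1 < e.2)%N.

Definition cross n (e f : edge n) : bool :=
  ((e.1 < f.1) && (f.1 < e.2) && (e.2 < f.2))%N ||
  ((f.1 < e.1) && (e.1 < f.2) && (f.2 < e.2))%N.

Definition adj n (F : {set edge n}) : rel 'I_n :=
  fun u v => ((u, v) \in F) || ((v, u) \in F).

Definition comp n (F : {set edge n}) (x : 'I_n) : {set 'I_n} :=
  [set y | connect (adj F) x y].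

(* F is a bond of G: F is a spanning subgraph (F ⊆ E) each of whose connected
   components is an induced subgraph of G. *)
Definition bond n (E F : {set edge n}) : Prop :=
  F \subset E /\
  forall x : 'I_n,
    [set e in E | (e.1 \in comp F x) && (e.2 \in comp F x)] \subset F.

Definition nc_bond n (E F : {set edge n}) : Prop :=
  bond E F /\
  forall x y : 'I_n, comp F x != comp F y ->
    ~ (exists a b c d : 'I_n,
         [/\ a \in comp F x, c \in comp F x, b \in comp F y, d \in comp F y &
             ((a < b) && (b < c) && (c < d))%N]).

Definition induced_rel n (E : {set edge n}) (W : {set 'I_n}) : rel 'I_n :=
  fun u v => [&& u \in W, v \in W & adj E u v].

Definition induced_connected n (E : {set edge n}) (W : {set 'I_n}) : Prop :=
  W != set0 /\ forall u v, u \in W -> v \in W -> connect (induced_rel E W) u v.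

Definition icon_contains n (E : {set edge n}) (e f : edge n) (W : {set 'I_n}) : Prop :=
  induced_connected E W /\ [/\ e.1 \in W, e.2 \in W, f.1 \in W & f.2 \in W].

Definition icon_minimal n (E : {set edge n}) (e f : edge n) (W : {set 'I_n}) : Prop :=
  icon_contains E e f W /\
  forall W' : {set 'I_n}, icon_contains E e f W' -> W' \subset W -> W' = W.

Definition is_J n (E : {set edge n}) (e f : edge n) (W : {set 'I_n}) : Prop :=
  icon_minimal E e f W /\ forall W' : {set 'I_n}, icon_minimal E e f W' -> W' = W.

Definition crossing_closed n (E : {set edge n}) : Prop :=
  forall e f, e \in E -> f \in E -> cross e f -> exists W, is_J E e f W.

Definition slt n (ord : rel (edge n)) (a b : edge n) : bool := ord a b && (a != b).

Definition total_order_on n (E : {set edge n}) (ord : rel (edge n)) : Prop :=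
  [/\ forall a, a \in E -> ord a a,
      forall a b, a \in E -> b \in E -> ord a b -> ord b a -> a = b,
      forall a b c, a \in E -> b \in E -> c \in E -> ord a b -> ord b c -> ord a c
    & forall a b, a \in E -> b \in E -> ord a b || ord b a].

Definition upper_crossing_closed n (E : {set edge n}) (ord : rel (edge n)) : Prop :=
  crossing_closed E /\
  forall e f, e \in E -> f \in E -> cross e f ->
    forall W, is_J E e f W ->
      exists h, [/\ h \in E, h.1 \in W, h.2 \in W, slt ord h e & slt ord h f].

Definition is_join n (E T J : {set edge n}) : Prop :=
  nc_bond E J /\ T \subset J /\
  forall K : {set edge n}, nc_bond E K -> T \subset K -> J \subset K.

Definition bounded_below n (E : {set edge n}) (ord : rel (edge n)) (T : {set edge n}) : Prop :=
  exists a, a \in E /\ (forall t, t \in T -> slt ord a t) /\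
    exists J, is_join E T J /\ [set a] \proper J.

Definition NBB n (E : {set edge n}) (ord : rel (edge n)) (S : {set edge n}) : Prop :=
  S \subset E /\ forall T : {set edge n}, T \subset S -> ~ bounded_below E ord T.

Definition mk_edge n (u v : 'I_n) : edge n := if (u < v)%N then (u, v) else (v, u).

Definition cycle_edges n (E : {set edge n}) (C : {set edge n}) : Prop :=
  exists s : seq 'I_n, [/\ uniq s, (3 <= size s)%N,
    C = [set:: [seq mk_edge p.1 p.2 | p <- zip s (rot 1 s)]] & C \subset E].

Definition broken_circuit n (E : {set edge n}) (ord : rel (edge n)) (B : {set edge n}) : Prop :=
  exists C m, [/\ cycle_edges E C, m \in C, (forall c, c \in C -> ord m c) & B = C :\ m].

Definition NBC n (E : {set edge n}) (ord : rel (edge n)) (S : {set edge n}) : Prop :=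
  S \subset E /\ forall B : {set edge n}, broken_circuit E ord B -> ~ (B \subset S).

Definition nc_NBC n (E : {set edge n}) (ord : rel (edge n)) (S : {set edge n}) : Prop :=
  NBC E ord S /\ forall e f, e \in S -> f \in S -> ~~ cross e f.

(* Main.v *)
From Pilot Require Import Defs.
From mathcomp Require Import all_boot zify.
From Stdlib Require Import Classical.
Import Pilot.Defs.

Lemma xor_cross n (p q u v : 'I_n) : p != q -> u != p -> u != q -> v != p -> v != q ->
  ((p < u) (+) (q < u)) != ((p < v) (+) (q < v)) -> cross (mk_edge p q) (mk_edge u v).
Proof.
rewrite /cross /mk_edge -!(inj_eq val_inj) /=.
case: ifP => h1; case: ifP => h2 /=; move: h1 h2;
move: (nat_of_ord p) (nat_of_ord q) (nat_of_ord u) (nat_of_ord v) => a b c d h1 h2;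
move=> H1 H2 H3 H4 H5;
case: (ltngtP a c) H2 => // ? _; case: (ltngtP a d) H4 => // ? _;
case: (ltngtP b c) H3 => // ? _; case: (ltngtP b d) H5 => // ? _; lia.
Qed.

Section Topo.
Variable n : nat.
Variable R : rel 'I_n.
Hypothesis Rirr : forall p q, R p q -> p != q.

Lemma parity (u v : 'I_n) :
 forall P p0, path R p0 P -> u \notin p0::P -> v \notin p0::P ->
 ((p0 < u) (+) (last p0 P < u)) != ((p0 < v) (+) (last p0 P < v)) ->
 exists p q, R p q /\ cross (mk_edge p q) (mk_edge u v).
Proof.
elim=> [|p1 P IH] p0 /=.
  by move=> _ _ _; rewrite !addbb.
move=> /andP[r01 pa]; rewrite !inE !negb_or => /and3P[u0 u1 uP] /and3P[v0 v1 vP] H.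
case: (boolP (((p0 < u) (+) (p1 < u)) != ((p0 < v) (+) (p1 < v)))) => Hg.
  exists p0, p1; split=> //; apply: xor_cross => //; exact: Rirr.
apply: (IH p1 pa); rewrite ?inE ?negb_or ?u1 ?uP ?v1 ?vP //.
move: H Hg; rewrite negbK.
move: (p0 < u) (p1 < u) (last p1 P < u) (p0 < v) (p1 < v) (last p1 P < v).
by do 6! case.
Qed.

Lemma chain (f : 'I_n -> bool) : forall Q b, path R b Q -> f b != f (last b Q) ->
  exists u v, [/\ R u v, u \in b::Q, v \in b::Q & f u != f v].
Proof.
elim=> [|y Q IH] b /=; first by rewrite eqxx.
move=> /andP[rby pQ] H; case: (boolP (f b != f y)) => hb.
  by exists b, y; rewrite !inE ?eqxx ?orbT.
have [u [v [ruv uQ vQ fuv]]] : exists u v, [/\ R u v, u \in y::Q, v \in y::Q & f u != f v].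
  by apply: IH => //; move: hb; rewrite negbK => /eqP <-.
by exists u, v; split => //; rewrite inE ?uQ ?vQ ?orbT.
Qed.

Lemma topo a P b Q : path R a P -> path R b Q ->
  (forall z, z \in a::P -> z \notin b::Q) ->
  (a < b) -> (b < last a P) -> (last a P < last b Q) ->
  exists p q u v, [/\ R p q, R u v & cross (mk_edge p q) (mk_edge u v)].
Proof.
move=> pP pQ dis ab bc cd.
pose f x := (a < x) (+) (last a P < x).
have H : f b != f (last b Q).
  by rewrite /f ab (ltn_trans ab (ltn_trans bc cd)) cd ltnNge (ltnW bc).
have [u [v [ruv uQ vQ fuv]]] := @chain f Q b pQ H.
have du : u \notin a::P by apply/negP => /dis; rewrite uQ.
have dv : v \notin a::P by apply/negP => /dis; rewrite vQ.
have [p [q [rpq cr]]] := @parity u v P a pP du dv fuv.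
by exists p, q, u, v.
Qed.
End Topo.

Section SeqLemmas.
Variables (T1 T2 : eqType).

Lemma mem_zip1 (s : seq T1) (t : seq T2) z : z \in zip s t -> z.1 \in s.
Proof.
elim: s t => [|x s IH] [|y t] //=; rewrite inE => /orP[/eqP -> | /IH h].
  by rewrite /= eqxx.
by rewrite h orbT.
Qed.

Lemma drop_zip (s : seq T1) (t : seq T2) i : drop i (zip s t) = zip (drop i s) (drop i t).
Proof. by elim: s t i => [|x s IH] [|y t] [|i] //=; first [exact: IH | case: (drop _ _)]. Qed.

Lemma take_zip (s : seq T1) (t : seq T2) i : take i (zip s t) = zip (take i s) (take i t).
Proof. by elim: s t i => [|x s IH] [|y t] [|i] //=; first [rewrite IH | case: (take _ _)]. Qed.

Lemma rot_zip (s : seq T1) (t : seq T2) i : size s = size t ->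
  zip (rot i s) (rot i t) = rot i (zip s t).
Proof.
by move=> h; rewrite /rot zip_cat ?size_drop ?h // drop_zip take_zip.
Qed.

Lemma zip_cons_rcons (x : T1) p (y : T1) :
  zip (x :: p) (rcons p y) = rcons (zip (x :: p) p) (last x p, y).
Proof. by elim: p x => [|q p IH] x //=; rewrite IH. Qed.

Lemma zip_rcons_l (s : seq T1) a (t : seq T2) : size t <= size s ->
  zip (rcons s a) t = zip s t.
Proof. by elim: s t => [|x s IH] [|y t] //= h; rewrite IH. Qed.

Lemma path_of_pairs (R : rel T1) x p :
  (forall z, z \in zip (x :: p) p -> R z.1 z.2) -> path R x p.
Proof.
elim: p x => [|y p IH] x //= h; rewrite (h (x, y)) ?inE ?eqxx //=.
by apply: IH => z hz; apply: h; rewrite inE hz orbT.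
Qed.

Lemma pairs_of_path (R : rel T1) x p :
  path R x p -> forall z, z \in zip (x :: p) p -> R z.1 z.2.
Proof.
elim: p x => [|y p IH] x //= /andP[hxy hp] z; rewrite inE => /orP[/eqP -> // | hz].
exact: (IH _ hp _ hz).
Qed.
End SeqLemmas.
Arguments pairs_of_path {T1 R x p}.
Arguments path_of_pairs {T1 R x p}.
Arguments mem_zip1 {T1 T2 s t z}.


Section Graph.
Variable n : nat.
Implicit Types F T : {set edge n}.

Definition simp F := forall e, e \in F -> e.1 < e.2.

Lemma adj_sym F : symmetric (adj F).
Proof. by move=> u v; rewrite /adj orbC. Qed.

Lemma conn_sym F : connect_sym (adj F).
Proof. exact: sym_connect_sym (adj_sym F). Qed.

Lemma adj_mk {F u v} : simp F -> adj F u v -> mk_edge u v \in F.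
Proof.
move=> sF; rewrite /adj /mk_edge; case/orP => h; have := sF _ h => /= lt.
  by rewrite lt.
by rewrite ltnNge (ltnW lt).
Qed.

Lemma adj_irr {F u v} : simp F -> adj F u v -> u != v.
Proof.
move=> sF; case/orP => h; have := sF _ h => /= lt; apply/eqP => e; subst;
by rewrite ltnn in lt.
Qed.

Lemma mk_edge12 {e : edge n} : e.1 < e.2 -> mk_edge e.1 e.2 = e.
Proof. by rewrite /mk_edge => ->; case: e. Qed.

Lemma mk_edge21 {e : edge n} : e.1 < e.2 -> mk_edge e.2 e.1 = e.
Proof. by rewrite /mk_edge => h; rewrite ltnNge (ltnW h); case: e h. Qed.

Lemma edge_adj F (e : edge n) : e \in F -> adj F e.1 e.2.
Proof. by rewrite /adj -surjective_pairing => ->. Qed.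

Lemma comp_eq F x y : connect (adj F) x y -> comp F x = comp F y.
Proof. by move=> h; apply/setP => z; rewrite !inE; apply: (same_connect (conn_sym F)). Qed.

Lemma conn_comp {F x y z} : y \in comp F x -> z \in comp F x -> connect (adj F) y z.
Proof.
rewrite !inE => h1 h2; apply: connect_trans h2; by rewrite conn_sym.
Qed.

Lemma sub_simp {F T} : T \subset F -> simp F -> simp T.
Proof. by move=> /subsetP sTF sF e /sTF /sF. Qed.

Variable E : {set edge n}.
Hypothesis sE : simp E.

Definition cl T := [set e in E | connect (adj T) e.1 e.2].

Lemma conn_cl T : T \subset E -> connect (adj (cl T)) =2 connect (adj T).
Proof.
move=> TE x y; apply/idP/idP; apply: connect_sub => u v.
  by case/orP; rewrite inE => /andP[_ h] //; rewrite conn_sym.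
move=> h; apply: connect1; rewrite /adj !inE /=.
  by case/orP: h => h; apply/orP; [left|right];
    rewrite (subsetP TE _ h) /= connect1 // /adj h ?orbT.
Qed.

Lemma comp_cl T : T \subset E -> comp (cl T) =1 comp T.
Proof. by move=> TE x; apply/setP => y; rewrite !inE conn_cl. Qed.

Lemma cl_join T : T \subset E -> (forall e f, e \in T -> f \in T -> ~~ cross e f) ->
  is_join E T (cl T).
Proof.
move=> TE nc; have sT := sub_simp TE sE.
have Tcl : T \subset cl T.
  apply/subsetP => e eT; rewrite inE (subsetP TE _ eT) /= connect1 //; exact: edge_adj.
split; [split; [split|] | split => //].
- by apply/subsetP => e; rewrite inE => /andP[].
- move=> x; apply/subsetP => e; rewrite !comp_cl // !inE => /and3P[eE h1 h2].
  by rewrite eE /=; apply: (@conn_comp T x); rewrite inE.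
- move=> x y; rewrite !comp_cl // => neq [a [b [c [d [ax cx sby dy /andP[/andP[ab bc] cd]]]]]].
  have /connectP [P pP eP] := conn_comp ax cx.
  have /connectP [Q pQ eQ] := conn_comp sby dy.
  subst c d.
  have dis : forall z, z \in a::P -> z \notin b::Q.
    move=> z za; apply/negP => zb; move/negP: neq; apply; apply/eqP.
    have ->: comp T x = comp T z.
      apply: comp_eq; apply: connect_trans (path_connect pP za).
      by move: ax; rewrite inE.
    have ->: comp T y = comp T z.
      apply: comp_eq; apply: connect_trans (path_connect pQ zb).
      by move: sby; rewrite inE.
    by [].
  have [p [q [u [v [rpq ruv cr]]]]] := @topo n (adj T) (fun p q => @adj_irr T p q sT) a P b Q pP pQ dis ab bc cd.
  by move: (nc _ _ (adj_mk sT rpq) (adj_mk sT ruv)); rewrite cr.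
- move=> K [[KE Kb] _] TK; apply/subsetP => e; rewrite inE => /andP[eE h].
  have hK : connect (adj K) e.1 e.2.
    have sub : subrel (adj T) (connect (adj K)).
      move=> u v huv; apply: connect1.
      by case/orP: huv => h'; rewrite /adj (subsetP TK _ h') ?orbT.
    exact: (@connect_sub _ _ _ sub _ _ h).
  apply: (subsetP (Kb e.1)); rewrite inE eE !inE connect0 /=; exact: hK.
Qed.

Lemma mk_adj F u v : mk_edge u v \in F -> adj F u v.
Proof. by rewrite /mk_edge /adj; case: ifP => _ ->; rewrite ?orbT. Qed.

Lemma mk_inj (u v u' v' : 'I_n) : mk_edge u v = mk_edge u' v' ->
  (u = u' /\ v = v') \/ (u = v' /\ v = u').
Proof. by rewrite /mk_edge; do 2 case: ifP => _; case=> -> ->; auto. Qed.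

Lemma cl_cycle (ord : rel (edge n)) T a : T \subset E -> a \in E ->
  connect (adj T) a.1 a.2 -> a \notin T -> (forall t, t \in T -> ord a t) -> ord a a ->
  exists B, broken_circuit E ord B /\ B \subset T.
Proof.
move=> TE aE /connectP[p pp] ep aT oT oa.
have sT := sub_simp TE sE; have lt := sE _ aE.
move: ep; case: (shortenP pp) => p' pp' up' _ ep.
have sz : 3 <= size (a.1 :: p').
  case: p' {up'} pp' ep => [|y [|w r]] //=.
    by move=> _ e; rewrite -e ltnn in lt.
  rewrite andbT => /(adj_mk sT) h e; subst y.
  by rewrite (mk_edge12 lt) (negbTE aT) in h.
set s := a.1 :: p'.
have hL : [seq mk_edge z.1 z.2 | z <- zip s (rot 1 s)] =
          rcons [seq mk_edge z.1 z.2 | z <- zip s p'] a.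
  by rewrite rot1_cons zip_cons_rcons map_rcons /= -ep mk_edge21.
have inT : forall z, z \in zip s p' -> mk_edge z.1 z.2 \in T.
  by move=> z hz; have := pairs_of_path pp' z hz; apply: adj_mk.
set C := [set:: [seq mk_edge z.1 z.2 | z <- zip s (rot 1 s)]].
have memC : forall c, c \in C -> c = a \/ c \in T.
  move=> c; rewrite inE hL mem_rcons inE => /orP[/eqP -> | /mapP[z hz ->]]; first by left.
  by right; apply: inT.
exists (C :\ a); split; last first.
  apply/subsetP => c; rewrite in_setD1 => /andP[ca /memC[e|//]].
  by rewrite e eqxx in ca.
exists C, a; split => //.
- exists s; split => //; apply/subsetP => c /memC[-> //| cT]; exact: subsetP TE _ cT.
- by rewrite inE hL mem_rcons mem_head.
- by move=> c /memC[-> // | /oT].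
Qed.

Lemma cycle_conn C m : cycle_edges E C -> m \in C ->
  connect (adj (C :\ m)) m.1 m.2 /\ exists t, t \in C :\ m.
Proof.
move=> [s [us sz eC CE]] mC; have := mC; rewrite {1}eC inE => /mapP[z hz em].
have [i L' hrot] := rot_to hz.
have eLt : zip (rot i s) (rot 1 (rot i s)) = z :: L'.
  by rewrite rot_rot rot_zip ?size_rot.
have memt : forall y, y \in zip (rot i s) (rot 1 (rot i s)) -> mk_edge y.1 y.2 \in C.
  move=> y; rewrite rot_rot rot_zip ?size_rot // mem_rot => h.
  by rewrite eC inE; apply/mapP; exists y.
have ut : uniq (rot i s) by rewrite rot_uniq.
have szt : 3 <= size (rot i s) by rewrite size_rot.
move: (rot i s) ut szt memt eLt => t; clear hrot.
case: t => [|t0 [|t1 [|w r]]] // ut _ memt; rewrite rot1_cons /= => [[ez _]].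
move: ut; rewrite /= !inE !negb_or => /andP[/and3P[t01 t0w t0r] /andP[/andP[t1w t1r] /andP[wr _]]].
subst z; rewrite /= in em.
have key : forall y, y \in zip (t1 :: w :: r) (w :: rcons r t0) -> mk_edge y.1 y.2 \in C :\ m.
  move=> y hy; rewrite in_setD1 memt ?andbT; last first.
    by move: hy; rewrite /= ?cats1 => hy; rewrite in_cons hy orbT.
  apply/eqP; rewrite em => /mk_inj.
  move: hy; rewrite inE => /orP[/eqP -> /= | /mem_zip1 /=].
    by case=> [[e _]|[_ e]]; [move: t01; rewrite e eqxx | move: t0w; rewrite e eqxx].
  rewrite inE => h1.
  case=> [[e _]|[e _]]; move: h1; rewrite e.
    by rewrite (negbTE t0w) (negbTE t0r).
  by rewrite (negbTE t1w) (negbTE t1r).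
have pth : path (adj (C :\ m)) t1 (w :: rcons r t0).
  apply: path_of_pairs => y; rewrite -[t1 :: w :: rcons r t0]/(rcons (t1 :: w :: r) t0).
  rewrite zip_rcons_l; last by rewrite /= size_rcons.
  by move=> hy; apply: mk_adj; apply: key.
have c10 : connect (adj (C :\ m)) t1 t0.
  by apply/connectP; exists (w :: rcons r t0) => //=; rewrite last_rcons.
split.
  have [[-> ->]|[-> ->]] : (m.1 = t0 /\ m.2 = t1) \/ (m.1 = t1 /\ m.2 = t0).
    by rewrite em /mk_edge; case: ifP; [left|right].
    by move: c10; rewrite conn_sym.
  by [].
exists (mk_edge t1 w); apply: (key (t1, w)); by rewrite inE eqxx.
Qed.

Definition EW (W : {set 'I_n}) := [set g in E | (g.1 \in W) && (g.2 \in W)].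

Lemma conn_EW W x y : connect (adj (EW W)) x y -> x = y \/ (x \in W /\ y \in W).
Proof.
move=> /connectP[p pp ->]; elim: p x pp => [|z p IH] x /=; first by left.
move=> /andP[hxz hp].
have [xW zW] : x \in W /\ z \in W.
  by case/orP: hxz; rewrite inE => /and3P[_ h1 h2].
by right; split => //; case: (IH z hp) => [<- | [_ h]].
Qed.

Lemma exists_min e f B : icon_contains E e f B ->
  exists W' : {set 'I_n}, W' \subset B /\ icon_minimal E e f W'.
Proof.
move: {2}#|B| (leqnn #|B|) => k; elim: k B => [|k IH] B.
  rewrite leqn0 cards_eq0 => /eqP -> [[/eqP h]] //.
move=> hk icB.
case: (classic (icon_minimal E e f B)) => hm; first by exists B.
have [W' [icW' [sub neq]]] : exists W' : {set 'I_n}, icon_contains E e f W' /\ W' \subset B /\ W' <> B.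
  apply: NNPP => hn; apply: hm; split => // W' h1 h2.
  by apply: NNPP => h3; apply: hn; exists W'.
have lt : #|W'| <= k.
  have : W' \proper B by rewrite properEneq sub andbT; apply/eqP.
  by move/proper_card => h; rewrite -ltnS (leq_trans h hk).
have [W'' [s2 m2]] := IH W' lt icW'.
by exists W''; split => //; apply: subset_trans s2 sub.
Qed.

Lemma EW_join e f W : e \in E -> f \in E -> cross e f -> is_J E e f W ->
  is_join E [set e; f] (EW W).
Proof.
move=> eE fE cef [[[icW [e1 e2 f1 f2]] minW] uniqW].
have [Wn Wc] := icW.
have EWE : EW W \subset E by apply/subsetP => g; rewrite inE => /andP[].
split; [split; [split|] | split].
- exact: EWE.
- move=> z; apply/subsetP => g; rewrite !inE => /and3P[gE /conn_EW h1 /conn_EW h2].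
  rewrite gE /=; have lt := sE _ gE.
  case: h1 => [q1|[zW g1W]]; case: h2 => [q2|[zW2 g2W]].
  + by move: lt; rewrite -q1 -q2 ltnn.
  + by rewrite g2W andbT -q1.
  + by rewrite g1W -q2.
  + by rewrite g1W g2W.
- move=> x y neq [a [b [c [d [ax cx sby dy /andP[/andP[ab bc] cd]]]]]].
  move: ax cx sby dy; rewrite !inE => /conn_EW ax /conn_EW cx /conn_EW sby /conn_EW dy.
  have xW : x \in W.
    case: ax => [ea|[]//]; case: cx => [ec|[]//].
    by move: (ltn_trans ab bc); rewrite -ea -ec ltnn.
  have yW : y \in W.
    case: sby => [eb|[]//]; case: dy => [ed|[]//].
    by move: (ltn_trans bc cd); rewrite -eb -ed ltnn.
  move/negP: neq; apply; apply/eqP; apply: comp_eq.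
  have := Wc _ _ xW yW; apply: connect_sub => u v /and3P[uW vW huv].
  apply: connect1; case/orP: huv => h; rewrite /adj !inE /= h uW vW ?orbT //.
- by apply/subsetP => g; rewrite !inE => /orP[]/eqP ->; rewrite ?eE ?fE /= ?e1 ?e2 ?f1 ?f2.
move=> K [[KE Kb] Knc] sK.
have eK : e \in K by apply: (subsetP sK); rewrite !inE eqxx.
have fK : f \in K by apply: (subsetP sK); rewrite !inE eqxx orbT.
have sK' := sub_simp KE sE.
have ee : e.2 \in comp K e.1 by rewrite inE connect1 // edge_adj.
have ff : f.2 \in comp K f.1 by rewrite inE connect1 // edge_adj.
have e1c : e.1 \in comp K e.1 by rewrite inE connect0.
have f1c : f.1 \in comp K f.1 by rewrite inE connect0.
have same : comp K e.1 = comp K f.1.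
  apply/eqP; apply: NNPP => hn; move: cef; rewrite /cross.
  have hn1 : comp K e.1 != comp K f.1 by apply/negP.
  case/orP => /andP[/andP[h1 h2] h3].
    by apply: (Knc _ _ hn1); exists e.1, f.1, e.2, f.2; split => //; rewrite h1 h2 h3.
  have hn' : comp K f.1 != comp K e.1 by rewrite eq_sym.
  by apply: (Knc _ _ hn'); exists f.1, e.1, f.2, e.2; split => //; rewrite h1 h2 h3.
set B := comp K e.1.
have icB : icon_contains E e f B.
  split; last by rewrite /B; split => //; rewrite same.
  split; first by apply/set0Pn; exists e.1.
  move=> u v uB vB; have /connectP[p pp ->] := conn_comp uB vB.
  apply/connectP; exists p => //.
  have hall : all (mem B) (u :: p).
    apply/allP => z hz; move: (path_connect pp hz) uB; rewrite /B !inE => h1 h2.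
    exact: connect_trans h2 h1.
  apply: (@sub_in_path _ (mem B) (adj K) (induced_rel E B) _ u p hall pp).
  move=> u' v' u'B v'B h; rewrite /induced_rel u'B v'B /=.
  by case/orP: h => h; rewrite /adj (subsetP KE _ h) ?orbT.
have [W' [sW' mW']] := exists_min e f B icB.
have eW : W' = W := uniqW _ mW'.
subst W'.
apply/subsetP => g; rewrite inE => /and3P[gE g1 g2].
apply: (subsetP (Kb e.1)); rewrite inE gE.
by rewrite (subsetP sW' _ g1) (subsetP sW' _ g2).
Qed.

End Graph.

Theorem lemma3p9 (n : nat) (E : {set edge n}) (ord : rel (edge n)) :
  simple_graph E ->
  total_order_on E ord ->
  upper_crossing_closed E ord ->
  forall (k : nat) (S : {set edge n}),
    #|S| = k -> (NBB E ord S <-> nc_NBC E ord S).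
Proof.
move=> sE [ordR _ _ _] [cc ucc] k S _.
have sE' : simp n E := sE.
split.
- case=> SE nbb.
  have ncS : forall e f, e \in S -> f \in S -> ~~ cross e f.
    move=> e f eS fS; apply/negP => cef.
    have eE := subsetP SE _ eS; have fE := subsetP SE _ fS.
    have [W hJ] := cc e f eE fE cef.
    have [h [hE h1 h2 he hf]] := ucc e f eE fE cef W hJ.
    apply: (nbb [set e; f]).
      by apply/subsetP => g; rewrite !inE => /orP[]/eqP->.
    exists h; split => //; split.
      by move=> t; rewrite !inE => /orP[]/eqP->.
    exists (EW n E W); split; first exact: EW_join.
    rewrite properE sub1set inE hE h1 h2 /=; apply/negP => /subsetP/(_ e).
    have [[[_ [e1 e2 _ _]] _] _] := hJ.
    rewrite !inE eE e1 e2 => /(_ isT) /eqP eh.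
    by move: he; rewrite /slt eh eqxx andbF.
  split => //; split => // B bc BS.
  have bc' := bc.
  case: bc => C [m [cyc mC minm eB]].
  have [conn [t tB]] := @cycle_conn n E C m cyc mC.
  have BE : B \subset E := subset_trans BS SE.
  have mE : m \in E by case: cyc => s [_ _ _ CE]; exact: subsetP CE _ mC.
  apply: (nbb B BS); exists m; split => //; split.
    move=> u; rewrite eB in_setD1 => /andP[um uC].
    by rewrite /slt minm // eq_sym um.
  exists (cl n E B); split.
    apply: cl_join => // e f eB' fB'; apply: ncS; exact: subsetP BS _ _.
  rewrite -eB in conn tB; rewrite properE sub1set inE mE conn /=; apply/negP => /subsetP/(_ t).
  have tcl : t \in cl n E B.
    rewrite inE (subsetP BE _ tB) /=; apply: connect1; exact: edge_adj.
  rewrite tcl inE => /(_ isT) /eqP et.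
  by move: tB; rewrite eB et in_setD1 eqxx.
- case=> [[SE nbc] ncS]; split => // T TS [a [aE [aT [J [hJ pr]]]]].
  have TE : T \subset E := subset_trans TS SE.
  have jT := @cl_join n E sE' T TE (fun e f eT fT => ncS e f (subsetP TS _ eT) (subsetP TS _ fT)).
  case: hJ => [Jnc [TJ Jmin]].
  have Jcl := Jmin _ jT.1 jT.2.1.
  have aJ : a \in J := proper1set pr.
  have := subsetP Jcl _ aJ; rewrite inE => /andP[_ conn].
  have aT' : a \notin T.
    by apply/negP => /aT; rewrite /slt eqxx andbF.
  have [B [bc BT]] := @cl_cycle n E sE' ord T a TE aE conn aT'
     (fun t ht => proj1 (andP (aT t ht))) (ordR a aE).
  by apply: (nbc B bc); apply: subset_trans BT TS.
Qed.
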